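(* In the setting described in the context, assume that (1) $\nu_x>0$ for every $x\in\mathcal X$ with $\alpha_x>0$; (2) $P_{\rm all}(W,x)>0$ whenever $W^x<\alpha_x$; (3) $\sum_{x\in D}\alpha_x\le\sum_{y\in N(D)}\beta_y$ for all $D\subseteq\mathcal X$, where $N(D)=\bigcup_{x\in D}N_x$. Then, from any initial partial allocation state, with probability $1$ the Markov process $W(t)$ enters the set $\mathcal W$ of allocation states after a finite number of jumps.
   Context: $\mathcal X$ is a finite set of units, $\mathcal G=(\mathcal X,\mathcal E)$ a directed graph, $N_x=\{y:(x,y)\in\mathcal E\}$, and $\alpha_x,\beta_x$ non-negative integers. A partial allocation state is a matrix $W\in\mathbb N^{\mathcal X\times\mathcal X}$ with $W_{xy}=0$ whenever $(x,y)\notin\mathcal E$, $W^x:=\sum_yW_{xy}\le\alpha_x$ and $W_y:=\sum_xW_{xy}\le\beta_y$; it is an allocation state if $W^x=\alpha_x$ for all $x$. $\mathcal W_p$ and $\mathcal W$ denote the sets of partial allocation states and allocation states; $e_{xy}$ is the matrix with $1$ in entry $(x,y)$ and $0$ elsewhere. Fix reals $\lambda_y$, parameters $k_c,k_a\ge0$, $\gamma>0$, and set $f_{xy}(W)=\lambda_y-k_cW_y/\beta_y+k_aW_{xy}$. Let $\mathcal X^x(W)=\{y\in N_x: W_y<\beta_y\}$ and define the Gibbs distribution on $\mathcal X^x(W)$ by $p_y(W,x)=e^{\gamma f_{xy}(W+e_{xy})}/\sum_{y'\in\mathcal X^x(W)}e^{\gamma f_{xy'}(W+e_{xy'})}$.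 For each unit $x$ and state $W$ let $P_{\rm all}(W,x),P_{\rm dis}(W,x)\ge0$ with $P_{\rm all}+P_{\rm dis}=1$, $P_{\rm all}(W,x)=0$ if $W^x=\alpha_x$, $P_{\rm dis}(W,x)=0$ if $W^x=0$. The process $W(t)$ on $\mathcal W_p$ is the continuous-time Markov process in which each unit $x$ activates according to an independent Poisson clock of rate $\nu_x\ge0$; when $x$ activates in state $W$: with probability $P_{\rm all}(W,x)$ it performs an allocation move, choosing $y^*\in\mathcal X^x(W)$ with probability $p_{y^*}(W,x)$ and passing to $W+e_{xy^*}$ (no action is possible if $\mathcal X^x(W)=\emptyset$); with probability $P_{\rm dis}(W,x)$ it performs a distribution move, choosing $\bar y$ with probability $W_{x\bar y}/W^x$, then $y^*\in\mathcal X^x(W-e_{x\bar y})$ with probability $p_{y^*}(W-e_{x\bar y},x)$, and passing to $W-e_{x\bar y}+e_{xy^*}$. *)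

(* Defs.v *)
From HB Require Import structures.
From mathcomp Require Import all_boot all_order all_algebra.
From mathcomp Require Import all_classical all_reals all_analysis.
Set Implicit Arguments. Unset Strict Implicit. Unset Printing Implicit Defensive.
Import Order.TTheory GRing.Theory Num.Theory.
Local Open Scope ring_scope.

Definition state (X : finType) := {ffun X * X -> nat}.

Section Model.
Context (R : realType) (X : finType).

Definition rowsum (W : state X) (x : X) : nat := (\sum_(y : X) W (x, y))%N.
Definition colsum (W : state X) (y : X) : nat := (\sum_(x : X) W (x, y))%N.

(* W + e_xy and W - e_xy (the latter only used when W_xy > 0) *)
Definition addE (W : state X) (x y : X) : state X :=
  [ffun p => (W p + (p == (x, y)))%N].
Definition subE (W : state X) (x y : X) : state X :=
  [ffun p => (W p - (p == (x, y)))%N].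

Definition partial_state (E : rel X) (alpha beta : X -> nat) (W : state X) : bool :=
  [&& [forall x, forall y, ~~ E x y ==> (W (x, y) == 0%N)],
      [forall x, rowsum W x <= alpha x]%N &
      [forall y, colsum W y <= beta y]%N].

Definition alloc_state (E : rel X) (alpha beta : X -> nat) (W : state X) : bool :=
  partial_state E alpha beta W && [forall x, rowsum W x == alpha x].

Context (E : rel X) (alpha beta : X -> nat) (lambda : X -> R) (kc ka gamma : R)
        (nu : X -> R) (Pall Pdis : state X -> X -> R).

Definition avail (W : state X) (x y : X) : bool := E x y && (colsum W y < beta y)%N.

Definition fxy (W : state X) (x y : X) : R :=
  lambda y - kc * (colsum W y)%:R / (beta y)%:R + ka * (W (x, y))%:R.

Definition gibbs (W : state X) (x y : X) : R :=
  if avail W x y then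
    expR (gamma * fxy (addE W x y) x y) /
    \sum_(y' | avail W x y') expR (gamma * fxy (addE W x y') x y')
  else 0.

(* Given h : state -> R, [jump W h] = sum over W' <> W of q(W, W') h(W'),
   where q(W, W') is the transition rate of the process from W to W'. *)
Definition jump (W : state X) (h : state X -> R) : R :=
  \sum_(x : X) nu x *
    (Pall W x *
       (\sum_(y | avail W x y)
          gibbs W x y * (if addE W x y != W then h (addE W x y) else 0))
     + Pdis W x *
       (\sum_(yb : X) ((W (x, yb))%:R / (rowsum W x)%:R) *
          \sum_(y | avail (subE W x yb) x y)
            gibbs (subE W x yb) x y *
            (if addE (subE W x yb) x y != W then h (addE (subE W x yb) x y)
             else 0))).

Definition qtot (W : state X) : R := jump W (fun _ => 1).

(* hitprob n W = probability that the jump chain of W(t), started at W,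
   is in the set of allocation states after at most n jumps
   (first-step analysis; an absorbing state, qtot = 0, never jumps again). *)
Fixpoint hitprob (n : nat) (W : state X) : R :=
  if alloc_state E alpha beta W then 1
  else match n with
       | 0%N => 0
       | n'.+1 => if qtot W == 0 then 0 else jump W (hitprob n') / qtot W
       end.

End Model.

Definition neighb (X : finType) (E : rel X) (D : {set X}) : {set X} :=
  [set y | [exists x in D, E x y]].

(* Main.v *)
Require Import Defs.
From HB Require Import structures.
From mathcomp Require Import all_boot all_order all_algebra.
From mathcomp Require Import all_classical all_reals all_analysis.
From mathcomp Require Import ring lra zify.
Import Order.TTheory GRing.Theory Num.Theory numFieldNormedType.Exports.
Local Open Scope ring_scope.

Section Comb.
Variable X : finType.

Lemma sum_ind (x y x' : X) : (\sum_(z : X) ((x', z) == (x, y)) = (x' == x))%N.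
Proof.
rewrite (bigD1 y) //= big1 => [|z /negbTE zy]; last by rewrite xpair_eqE zy andbF.
by rewrite xpair_eqE eqxx andbT addn0.
Qed.

Lemma sum_ind' (x y y' : X) : (\sum_(z : X) ((z, y') == (x, y)) = (y' == y))%N.
Proof.
rewrite (bigD1 x) //= big1 => [|z /negbTE zy]; last by rewrite xpair_eqE zy.
by rewrite xpair_eqE eqxx addn0.
Qed.

Lemma rowsum_addE (W : state X) x y x' :
  rowsum (addE W x y) x' = (rowsum W x' + (x' == x))%N.
Proof.
rewrite /rowsum -(sum_ind x y) -big_split /=; apply: eq_bigr => z _; by rewrite ffunE.
Qed.

Lemma colsum_addE (W : state X) x y y' :
  colsum (addE W x y) y' = (colsum W y' + (y' == y))%N.
Proof.
rewrite /colsum -(sum_ind' x) -big_split /=; apply: eq_bigr => z _; by rewrite ffunE.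
Qed.

Lemma subEK (W : state X) x y : (0 < W (x, y))%N -> addE (subE W x y) x y = W.
Proof.
move=> h; apply/ffunP => p; rewrite !ffunE.
case: eqP => [->|_]; last by rewrite subn0 addn0.
by rewrite subnK.
Qed.

Lemma addE_neq (W : state X) x y : addE W x y != W.
Proof.
apply/eqP => /ffunP /(_ (x, y)); rewrite ffunE eqxx => /eqP; by rewrite -{2}(addn0 (W (x,y))) eqn_add2l.
Qed.

Lemma subE_le (W : state X) x y p : (subE W x y p <= W p)%N.
Proof. by rewrite ffunE leq_subr. Qed.

Lemma colsum_subE_le (W : state X) x y y' : (colsum (subE W x y) y' <= colsum W y')%N.
Proof. by apply: leq_sum => z _; apply: subE_le. Qed.

Variables (E : rel X) (alpha beta : X -> nat).

Lemma partial_addE W x y : partial_state E alpha beta W -> E x y ->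
  (colsum W y < beta y)%N -> (rowsum W x < alpha x)%N ->
  partial_state E alpha beta (addE W x y).
Proof.
case/and3P=> /forallP he /forallP hr /forallP hc exy hcy hrx; apply/and3P; split.
- apply/forallP => a; apply/forallP => b; apply/implyP => nab.
  rewrite ffunE; move: (he a) => /forallP /(_ b) /implyP /(_ nab) /eqP ->.
  case: ((a, b) =P (x, y)) => [[ax bx]|_] //; by move: nab; rewrite ax bx exy.
- apply/forallP => a; rewrite rowsum_addE; case: eqP => [->|_]; first by rewrite addn1.
  by rewrite addn0.
- apply/forallP => b; rewrite colsum_addE; case: eqP => [->|_]; first by rewrite addn1.
  by rewrite addn0.
Qed.

Lemma partial_move W x yb y : partial_state E alpha beta W -> (0 < W (x, yb))%N -> E x y ->
  (colsum (subE W x yb) y < beta y)%N ->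
  partial_state E alpha beta (addE (subE W x yb) x y).
Proof.
move=> hW hp exy hcy; move: (hW) => /and3P [/forallP he /forallP hr /forallP hc].
apply/and3P; split.
- apply/forallP => a; apply/forallP => b; apply/implyP => nab.
  rewrite ffunE; have := subE_le W x yb (a, b).
  move: (he a) => /forallP /(_ b) /implyP /(_ nab) /eqP -> /[!leqn0] /eqP ->.
  case: ((a, b) =P (x, y)) => [[ax bx]|_] //; by move: nab; rewrite ax bx exy.
- apply/forallP => a; rewrite rowsum_addE.
  have := hr a; by rewrite -{1}(subEK _ _ _ hp) rowsum_addE.
- apply/forallP => b; rewrite colsum_addE; case: eqP => [->|_]; first by rewrite addn1.
  rewrite addn0; apply: leq_trans (hc b); exact: colsum_subE_le.
Qed.

End Comb.
Section Prob.
Variables (R : realType) (X : finType) (E : rel X) (alpha beta : X -> nat)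
  (lambda : X -> R) (kc ka gamma : R) (nu : X -> R) (Pall Pdis : state X -> X -> R).
Hypotheses (hnu : forall x, 0 <= nu x)
  (hPall0 : forall W x, partial_state E alpha beta W -> 0 <= Pall W x)
  (hPdis0 : forall W x, partial_state E alpha beta W -> 0 <= Pdis W x)
  (hPsum : forall W x, partial_state E alpha beta W -> Pall W x + Pdis W x = 1)
  (hPallfull : forall W x, partial_state E alpha beta W ->
     rowsum W x = alpha x -> Pall W x = 0)
  (hPdisempty : forall W x, partial_state E alpha beta W ->
     rowsum W x = 0%N -> Pdis W x = 0)
  (H1 : forall x, (0 < alpha x)%N -> 0 < nu x)
  (H2 : forall W x, partial_state E alpha beta W ->
     (rowsum W x < alpha x)%N -> 0 < Pall W x)
  (H3 : forall D : {set X},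
     (\sum_(x in D) alpha x <= \sum_(y in neighb E D) beta y)%N).

Local Notation partial := (partial_state E alpha beta).
Local Notation av := (avail E beta).
Local Notation gb := (gibbs E beta lambda kc ka gamma).
Local Notation jp := (jump E beta lambda kc ka gamma nu Pall Pdis).
Local Notation qt := (qtot E beta lambda kc ka gamma nu Pall Pdis).
Local Notation hp := (hitprob E alpha beta lambda kc ka gamma nu Pall Pdis).

Definition Aall W x (h : state X -> R) := \sum_(y | av W x y)
  gb W x y * (if addE W x y != W then h (addE W x y) else 0).
Definition Ddis W x yb (h : state X -> R) := \sum_(y | av (subE W x yb) x y)
  gb (subE W x yb) x y *
  (if addE (subE W x yb) x y != W then h (addE (subE W x yb) x y) else 0).
Definition Tm W x h := nu x * (Pall W x * Aall W x h +
  Pdis W x * \sum_(yb : X) ((W (x, yb))%:R / (rowsum W x)%:R) * Ddis W x yb h).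

Lemma jumpE W h : jp W h = \sum_x Tm W x h.
Proof. by []. Qed.

Lemma gibbs_ge0 W x y : 0 <= gb W x y.
Proof.
rewrite /gibbs; case: ifP => // _; apply: divr_ge0; first exact/ltW/expR_gt0.
by apply: sumr_ge0 => i _; exact/ltW/expR_gt0.
Qed.

Lemma gibbs_gt0 W x y : av W x y -> 0 < gb W x y.
Proof.
move=> a; rewrite /gibbs a; apply: divr_gt0; first exact/expR_gt0.
rewrite (bigD1 y) //=; apply: ltr_pwDl; first exact: expR_gt0.
by apply: sumr_ge0 => i _; exact/ltW/expR_gt0.
Qed.

Lemma sum_lin (I : finType) (P : pred I) (G H : I -> R) a b :
  \sum_(i | P i) (a * G i + b * H i) = a * \sum_(i | P i) G i + b * \sum_(i | P i) H i.
Proof. by rewrite big_split /= !mulr_sumr. Qed.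

Lemma if_lin (c : bool) (u v a b : R) :
  (if c then a * u + b * v else 0) = a * (if c then u else 0) + b * (if c then v else 0).
Proof. by case: c; rewrite ?mulr0 ?addr0. Qed.

Lemma Aall_lin W x f g a b :
  Aall W x (fun s => a * f s + b * g s) = a * Aall W x f + b * Aall W x g.
Proof.
rewrite /Aall -sum_lin; apply: eq_bigr => y _; rewrite if_lin.
ring.
Qed.

Lemma Ddis_lin W x yb f g a b :
  Ddis W x yb (fun s => a * f s + b * g s) = a * Ddis W x yb f + b * Ddis W x yb g.
Proof.
rewrite /Ddis -sum_lin; apply: eq_bigr => y _; rewrite if_lin.
ring.
Qed.

Lemma jump_lin W f g a b :
  jp W (fun s => a * f s + b * g s) = a * jp W f + b * jp W g.
Proof.
rewrite !jumpE -sum_lin; apply: eq_bigr => x _; rewrite /Tm Aall_lin.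
have -> : \sum_yb (W (x, yb))%:R / (rowsum W x)%:R * Ddis W x yb (fun s => a * f s + b * g s)
  = a * \sum_yb (W (x, yb))%:R / (rowsum W x)%:R * Ddis W x yb f +
    b * \sum_yb (W (x, yb))%:R / (rowsum W x)%:R * Ddis W x yb g.
  rewrite -sum_lin; apply: eq_bigr => yb _; rewrite Ddis_lin.
  ring.
set A1 := Aall W x f; set A2 := Aall W x g.
set S1 := \sum_yb _; set S2 := \sum_yb _.
ring.
Qed.

Lemma sum_ge_term (I : finType) (P : pred I) (F : I -> R) i :
  P i -> (forall j, P j -> 0 <= F j) -> F i <= \sum_(j | P j) F j.
Proof. by move=> Pi h; rewrite (bigD1 i) //= lerDl; apply: sumr_ge0 => j /andP [] /h. Qed.

Lemma partial_rowsum W x : partial W -> (rowsum W x <= alpha x)%N.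
Proof. by case/and3P => _ /forallP. Qed.

Lemma partial_colsum W y : partial W -> (colsum W y <= beta y)%N.
Proof. by case/and3P => _ _ /forallP. Qed.

Section Nonneg.
Variables (h : state X -> R) (hh : forall s, partial s -> 0 <= h s).

Lemma Aall_ge0 W x : partial W -> (rowsum W x < alpha x)%N -> 0 <= Aall W x h.
Proof.
move=> pW hr; apply: sumr_ge0 => y /andP [exy hc]; apply: mulr_ge0; first exact: gibbs_ge0.
by case: ifP => // _; apply: hh; apply: partial_addE.
Qed.

Lemma Ddis_ge0 W x yb : partial W -> (0 < W (x, yb))%N -> 0 <= Ddis W x yb h.
Proof.
move=> pW hp; apply: sumr_ge0 => y /andP [exy hc]; apply: mulr_ge0; first exact: gibbs_ge0.
by case: ifP => // _; apply: hh; apply: partial_move.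
Qed.

Lemma PA_ge0 W x : partial W -> 0 <= Pall W x * Aall W x h.
Proof.
move=> pW; case: (ltnP (rowsum W x) (alpha x)) => hr.
  by apply: mulr_ge0; [exact: hPall0 | exact: Aall_ge0].
rewrite hPallfull ?mul0r //; apply/eqP; rewrite eqn_leq hr partial_rowsum //.
Qed.

Lemma Dterm_ge0 W x yb : partial W ->
  0 <= (W (x, yb))%:R / (rowsum W x)%:R * Ddis W x yb h.
Proof.
move=> pW; case: (posnP (W (x, yb))) => hp; first by rewrite hp mul0r mul0r.
by apply: mulr_ge0; [apply: divr_ge0; exact: ler0n | exact: Ddis_ge0].
Qed.

Lemma PD_ge0 W x : partial W -> 0 <= Pdis W x *
  \sum_(yb : X) ((W (x, yb))%:R / (rowsum W x)%:R) * Ddis W x yb h.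
Proof.
by move=> pW; apply: mulr_ge0; [exact: hPdis0 | apply: sumr_ge0 => yb _; exact: Dterm_ge0].
Qed.

Lemma Tm_ge0 W x : partial W -> 0 <= Tm W x h.
Proof. by move=> pW; apply: mulr_ge0 => //; apply: addr_ge0; [exact: PA_ge0|exact: PD_ge0]. Qed.

Lemma jump_ge0 W : partial W -> 0 <= jp W h.
Proof. by move=> pW; rewrite jumpE; apply: sumr_ge0 => x _; exact: Tm_ge0. Qed.

Lemma jump_ge_Tm W x : partial W -> Tm W x h <= jp W h.
Proof. by move=> pW; rewrite jumpE; apply: sum_ge_term => // j _; exact: Tm_ge0. Qed.

Lemma Tm_ge_alloc W x y : partial W -> av W x y -> (rowsum W x < alpha x)%N ->
  nu x * (Pall W x * (gb W x y * h (addE W x y))) <= Tm W x h.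
Proof.
move=> pW a hr; rewrite /Tm; apply: ler_wpM2l => //.
apply: le_trans (_ : Pall W x * Aall W x h <= _); last by rewrite lerDl PD_ge0.
apply: ler_wpM2l; first exact: hPall0.
have := @sum_ge_term X (av W x) (fun y => gb W x y *
  (if addE W x y != W then h (addE W x y) else 0)) y a.
rewrite addE_neq; apply => // j /andP [exy hc].
apply: mulr_ge0; first exact: gibbs_ge0.
by case: ifP => // _; apply: hh; apply: partial_addE.
Qed.

Lemma Tm_ge_move W x yb y : partial W -> (0 < W (x, yb))%N -> av (subE W x yb) x y ->
  addE (subE W x yb) x y != W ->
  nu x * (Pdis W x * ((W (x, yb))%:R / (rowsum W x)%:R *
     (gb (subE W x yb) x y * h (addE (subE W x yb) x y)))) <= Tm W x h.
Proof.
move=> pW hp a hne; rewrite /Tm; apply: ler_wpM2l => //.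
apply: le_trans (_ : Pdis W x * \sum_(yb : X) ((W (x, yb))%:R / (rowsum W x)%:R) *
   Ddis W x yb h <= _); last by rewrite lerDr PA_ge0.
apply: ler_wpM2l; first exact: hPdis0.
apply: le_trans (_ : (W (x, yb))%:R / (rowsum W x)%:R * Ddis W x yb h <= _); last first.
  by apply: (@sum_ge_term X predT) => // j _; exact: Dterm_ge0.
apply: ler_wpM2l; first by apply: divr_ge0; exact: ler0n.
have := @sum_ge_term X (av (subE W x yb) x) (fun y => gb (subE W x yb) x y *
  (if addE (subE W x yb) x y != W then h (addE (subE W x yb) x y) else 0)) y a.
rewrite hne; apply => j /andP [exy hc]; apply: mulr_ge0; first exact: gibbs_ge0.
by case: ifP => // _; apply: hh; apply: partial_move.
Qed.

End Nonneg.

Lemma jump_mono W h h' : partial W -> (forall s, partial s -> h s <= h' s) ->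
  jp W h <= jp W h'.
Proof.
move=> pW hle; rewrite -subr_ge0.
have -> : jp W h' - jp W h = jp W (fun s => 1 * h' s + (-1) * h s).
  by rewrite jump_lin; ring.
by apply: jump_ge0 => // s ps; rewrite mul1r mulN1r subr_ge0; exact: hle.
Qed.

Local Notation alloc := (alloc_state E alpha beta).

Lemma hp0 W : hp 0 W = if alloc W then 1 else 0.
Proof. by []. Qed.

Lemma hpS n W : hp n.+1 W =
  if alloc W then 1 else if qt W == 0 then 0 else jp W (hp n) / qt W.
Proof. by []. Qed.

Lemma hp_alloc n W : alloc W -> hp n W = 1.
Proof. by case: n => [|n] /= ->. Qed.

Lemma hp_stuck n W : ~~ alloc W -> qt W = 0 -> hp n W = 0.
Proof. by move=> /negbTE na hq; case: n => [|n]; rewrite ?hp0 ?hpS na // hq eqxx. Qed.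

Lemma qt_ge0 W : partial W -> 0 <= qt W.
Proof. by move=> pW; apply: jump_ge0 => // s _. Qed.

Lemma hp_bounds n W : partial W -> 0 <= hp n W <= 1.
Proof.
elim: n W => [|n IH] W pW; first by rewrite hp0; case: ifP => _; rewrite ?lexx ?ler01.
rewrite hpS; case: ifP => _; first by rewrite ler01 lexx.
case: eqP => hq; first by rewrite lexx ler01.
have qp : 0 < qt W by rewrite lt_def qt_ge0 // andbT; apply/eqP.
apply/andP; split.
  by apply: divr_ge0; [apply: jump_ge0 => // s /IH /andP [h _] | exact: ltW].
rewrite ler_pdivrMr // mul1r; apply: jump_mono => // s /IH /andP [_ h]; exact: h.
Qed.

Lemma submult n m W e : (forall s, partial s -> 1 - hp n s <= e) -> 0 <= e ->
  partial W -> 1 - hp (n + m) W <= (1 - hp m W) * e.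
Proof.
move=> he e0; elim: m W => [|m IH] W pW.
  rewrite addn0 hp0; case: ifP => al; first by rewrite hp_alloc // subrr mul0r.
  by rewrite subr0 mul1r; exact: he.
rewrite addnS !hpS; case: ifP => al; first by rewrite subrr mul0r.
case: eqP => hq.
  have := he W pW; rewrite hp_stuck ?al // => h1.
  by move: h1; rewrite !subr0 mul1r.
have qp : 0 < qt W by rewrite lt_def qt_ge0 // andbT; apply/eqP.
set J1 := jp W (hp (n + m)); set J2 := jp W (hp m).
have : jp W (fun s => (1 - e) * 1 + e * hp m s) <= J1.
  apply: jump_mono => // s ps; have := IH s ps; lra.
rewrite jump_lin -/J2 => hJ.
have hq' : qt W != 0 by apply/eqP.
have : ((1 - e) * qt W + e * J2) / qt W <= J1 / qt W.
  by rewrite ler_pdivlMr // divfK.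
have -> : ((1 - e) * qt W + e * J2) / qt W = (1 - e) + e * (J2 / qt W) by field.
set A := J1 / qt W; set B := J2 / qt W => hAB.
have -> : (1 - B) * e = e - e * B by ring.
lra.
Qed.

Lemma pos_from_jump n W : partial W -> ~~ alloc W -> 0 < jp W (hp n) -> 0 < hp n.+1 W.
Proof.
move=> pW /negbTE na hJ; rewrite hpS na.
have : jp W (hp n) <= qt W by apply: jump_mono => // s /(hp_bounds n) /andP [_ h]; exact: h.
move=> hle; have qp : 0 < qt W := lt_le_trans hJ hle.
by rewrite gt_eqF //; apply: divr_gt0.
Qed.

Lemma notalloc W x : (rowsum W x < alpha x)%N -> ~~ alloc W.
Proof.
move=> hr; apply/negP => /andP [_ /forallP /(_ x) /eqP hx]; by rewrite hx ltnn in hr.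
Qed.

Lemma alloc_step n W x y : partial W -> (rowsum W x < alpha x)%N -> E x y ->
  (colsum W y < beta y)%N -> 0 < hp n (addE W x y) -> 0 < hp n.+1 W.
Proof.
move=> pW hr exy hc hpos; apply: pos_from_jump => //; first exact: notalloc hr.
have a : av W x y by rewrite /avail exy.
have hh : forall s, partial s -> 0 <= hp n s by move=> s /(hp_bounds n) /andP [h _].
apply: lt_le_trans (jump_ge_Tm (hp n) hh W x pW).
apply: lt_le_trans (Tm_ge_alloc (hp n) hh W x y pW a hr).
apply: mulr_gt0; first by apply: H1; apply: leq_ltn_trans hr.
by apply: mulr_gt0; [exact: H2 | apply: mulr_gt0 => //; exact: gibbs_gt0].
Qed.

Lemma le_entry_rowsum (W : state X) x y : (W (x, y) <= rowsum W x)%N.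
Proof. by rewrite /rowsum (bigD1 y) //= leq_addr. Qed.

Lemma dist_step n W x yb y : partial W -> (0 < W (x, yb))%N -> rowsum W x = alpha x ->
  E x y -> (colsum W y < beta y)%N -> y != yb -> ~~ alloc W ->
  0 < hp n (addE (subE W x yb) x y) -> 0 < hp n.+1 W.
Proof.
move=> pW hW hr exy hc nyy na hpos; apply: pos_from_jump => //.
have a : av (subE W x yb) x y.
  by rewrite /avail exy /=; exact: leq_ltn_trans (colsum_subE_le _ W x yb y) hc.
have hne : addE (subE W x yb) x y != W.
  apply/eqP => /ffunP /(_ (x, yb)); rewrite !ffunE eqxx xpair_eqE eqxx /= eq_sym (negbTE nyy) addn0.
  move: hW; lia.
have hh : forall s, partial s -> 0 <= hp n s by move=> s /(hp_bounds n) /andP [h _].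
apply: lt_le_trans (jump_ge_Tm (hp n) hh W x pW).
apply: lt_le_trans (Tm_ge_move (hp n) hh W x yb y pW hW a hne).
have rpos : (0 < rowsum W x)%N := leq_trans hW (le_entry_rowsum W x yb).
apply: mulr_gt0; first by apply: H1; rewrite -hr.
have -> : Pdis W x = 1 by rewrite -(hPsum W x pW) hPallfull // add0r.
rewrite mul1r; apply: mulr_gt0; first by apply: divr_gt0; rewrite ltr0n.
by apply: mulr_gt0 => //; exact: gibbs_gt0.
Qed.

Fixpoint reach (W : state X) (k : nat) (z : X) : Prop :=
  match k with
  | 0 => exists x, (rowsum W x < alpha x)%N /\ E x z
  | k'.+1 => reach W k' z \/ exists x z1, [/\ reach W k' z1, (0 < W (x, z1))%N & E x z]
  end.

Lemma reach_mono (W : state X) i j z : (i <= j)%N -> reach W i z -> reach W j z.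
Proof.
elim: j => [|j IH]; first by rewrite leqn0 => /eqP ->.
rewrite leq_eqVlt => /orP [/eqP -> //|]; rewrite ltnS => hij hr; left; exact: IH.
Qed.

Lemma rowsum_move (W : state X) x y' y x' : (0 < W (x, y'))%N ->
  rowsum (addE (subE W x y') x y) x' = rowsum W x'.
Proof.
move=> hp; by rewrite rowsum_addE -{2}(subEK _ _ _ _ hp) rowsum_addE.
Qed.

Lemma reach_move (W : state X) x y' y : (0 < W (x, y'))%N -> forall j z, reach W j z ->
  reach (addE (subE W x y') x y) j z \/ exists2 i, (i < j)%N & reach W i y'.
Proof.
move=> hp; elim=> [|j IH] z /=.
  by move=> [a [ha eaz]]; left; exists a; rewrite rowsum_move.
case=> [/IH [h|[i hi h]]|[a [z1 [hr hpos eaz]]]].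
- by left; left.
- by right; exists i => //; apply: ltn_trans hi _.
- case: (IH z1 hr) => [h|[i hi h]]; last by right; exists i => //; apply: ltn_trans hi _.
  case: ((a, z1) =P (x, y')) => [[_ ez]|neq]; first by right; exists j => //; rewrite -ez.
  left; right; exists a, z1; split => //.
  rewrite !ffunE; move/eqP/negbTE: neq => ->; rewrite subn0; exact: leq_trans hpos (leq_addr _ _).
Qed.

Definition deficit (W : state X) := (\sum_x (alpha x - rowsum W x))%N.

Lemma deficit_addE (W : state X) x y : (rowsum W x < alpha x)%N -> deficit W = (deficit (addE W x y)).+1.
Proof.
move=> hr; rewrite /deficit (bigD1 x) //= [X in _ = X.+1](bigD1 x) //= rowsum_addE eqxx.
have -> : (\sum_(i | i != x) (alpha i - rowsum (addE W x y) i) =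
  \sum_(i | i != x) (alpha i - rowsum W i))%N.
  by apply: eq_bigr => i /negbTE hi; rewrite rowsum_addE hi addn0.
lia.
Qed.

Lemma deficit_move (W : state X) x y' y : (0 < W (x, y'))%N ->
  deficit (addE (subE W x y') x y) = deficit W.
Proof. by move=> hp; apply: eq_bigr => i _; rewrite rowsum_move. Qed.

Definition good (W : state X) := exists n, 0 < hp n W.

Lemma good_inner d (OIH : forall W, partial W -> (deficit W < d)%N -> good W) :
  forall k W z, partial W -> deficit W = d -> reach W k z -> (colsum W z < beta z)%N -> good W.
Proof.
elim/ltn_ind => k IH W z pW hd hr hz.
case al : (alloc W); first by exists 0%N; rewrite hp0 al ltr01.
have astep : forall x y, (rowsum W x < alpha x)%N -> E x y -> (colsum W y < beta y)%N -> good W.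
  move=> x y hx exy hy; have [n hn] : good (addE W x y).
    apply: OIH; first exact: partial_addE.
    by rewrite -hd (deficit_addE W x y hx).
  by exists n.+1; apply: alloc_step hn.
case: k IH hr => [|k] IH /=.
  by move=> [x [hx exz]]; exact: astep hx exz hz.
case=> [hr|[a [z1 [hr hpos eaz]]]]; first exact: IH hr hz.
case: (ltnP (colsum W z1) (beta z1)) => hz1; first exact: IH hr hz1.
case: (ltnP (rowsum W a) (alpha a)) => ha; first exact: astep ha eaz hz.
have har : rowsum W a = alpha a by apply/eqP; rewrite eqn_leq ha partial_rowsum.
have nzz : z != z1 by apply/eqP => ezz; move: hz; rewrite ezz ltnNge hz1.
case: (reach_move W a z1 z hpos _ _ hr) => [hr'|[i hi hri]]; last first.
  apply: (IH i.+1 _ W z pW hd _ hz); first by rewrite ltnS.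
  by right; exists a, z1; split.
set W' := addE (subE W a z1) a z.
have hcs : (colsum (subE W a z1) z < beta z)%N := leq_ltn_trans (colsum_subE_le _ W a z1 z) hz.
have pW' : partial W' by apply: partial_move.
have hz1' : (colsum W' z1 < beta z1)%N.
  rewrite /W' colsum_addE eq_sym (negbTE nzz) addn0.
  have := partial_colsum W z1 pW; rewrite -{1}(subEK _ _ _ _ hpos) colsum_addE eqxx addn1; exact.
have [n hn] : good W' by apply: (IH k) hr' hz1' => //; rewrite deficit_move.
exists n.+1; apply: dist_step hn => //; by rewrite al.
Qed.

Lemma hall (W : state X) : partial W -> ~~ alloc W ->
  exists k z, reach W k z /\ (colsum W z < beta z)%N.
Proof.
move=> pW na.
have [x0 hx0] : exists x0, (rowsum W x0 < alpha x0)%N.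
  move: na; rewrite /alloc_state pW /= negb_forall => /existsP [x hx]; exists x.
  by rewrite ltn_neqAle hx partial_rowsum.
case: (pselect (exists k z, reach W k z /\ (colsum W z < beta z)%N)) => // hno.
exfalso.
have full : forall k z, reach W k z -> (beta z <= colsum W z)%N.
  by move=> k z hr; rewrite leqNgt; apply/negP => h; apply: hno; exists k, z.
pose Y := [set z | `[< exists k, reach W k z >]].
have inYP z : reflect (exists k, reach W k z) (z \in Y) by rewrite inE; exact: asboolP.
pose Xc := [set x | (rowsum W x < alpha x)%N || [exists z in Y, (0 < W (x, z))%N]].
have NXc : neighb E Xc \subset Y.
  apply/fintype.subsetP => z; rewrite inE => /existsP [x /andP [hx exz]]; apply/inYP.
  move: hx; rewrite inE => /orP [hx | /existsP [z1 /andP [/inYP [k hk] hp]]].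
    by exists 0%N, x.
  by exists k.+1; right; exists x, z1.
have outXc : forall x z, x \notin Xc -> z \in Y -> W (x, z) = 0%N.
  move=> x z hx hz; apply/eqP; rewrite -leqn0 leqNgt; apply/negP => hp.
  by move: hx; rewrite inE negb_or => /andP [_ /existsP []]; exists z; rewrite hz.
have c1 := H3 Xc.
have c2 : (\sum_(y in neighb E Xc) beta y <= \sum_(y in Y) beta y)%N.
  rewrite big_mkcond [X in (_ <= X)%N]big_mkcond; apply: leq_sum => y _.
  by case: ifP => h1 //; rewrite (fintype.subsetP NXc y h1).
have c3 : (\sum_(y in Y) beta y <= \sum_(y in Y) colsum W y)%N.
  by apply: leq_sum => y /inYP [k hk]; exact: full k y hk.
have c4 : (\sum_(y in Y) colsum W y = \sum_x \sum_(y in Y) W (x, y))%N.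
  by rewrite /colsum; exact: exchange_big.
have c5 : (\sum_x \sum_(y in Y) W (x, y) <= \sum_(x in Xc) rowsum W x)%N.
  rewrite [X in (_ <= X)%N]big_mkcond; apply: leq_sum => x _; case: ifP => hx.
    by rewrite /rowsum [X in (_ <= X)%N](bigID (fun y => y \in Y)) /= leq_addr.
  by rewrite big1 // => y hy; apply: outXc; rewrite ?hx.
have x0X : x0 \in Xc by rewrite inE hx0.
have c6 : (\sum_(x in Xc) rowsum W x < \sum_(x in Xc) alpha x)%N.
  rewrite (bigD1 x0) // [X in (_ < X)%N](bigD1 x0) //=.
  have : (\sum_(i in Xc | i != x0) rowsum W i <= \sum_(i in Xc | i != x0) alpha i)%N.
    by apply: leq_sum => i _; exact: partial_rowsum.
  lia.
lia.
Qed.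

Lemma good_all (W : state X) : partial W -> good W.
Proof.
suff: forall d W, deficit W = d -> partial W -> good W by move=> h; exact: h _ W erefl.
elim/ltn_ind => d IH {}W hd pW.
case al : (alloc W); first by exists 0%N; rewrite hp0 al ltr01.
have [k [z [hr hz]]] := hall W pW (negbT al).
apply: (good_inner d _ k W z pW hd hr hz).
by move=> W' pW' hlt; exact: IH _ hlt W' erefl pW'.
Qed.

Definition Mb := (\sum_x alpha x)%N.
Definition conv (t : {ffun X * X -> 'I_Mb.+1}) : state X := [ffun p => nat_of_ord (t p)].

Lemma conv_surj (W : state X) : partial W -> exists t, conv t = W.
Proof.
move=> pW; exists [ffun p => inord (W p)]; apply/ffunP => [[x y]]; rewrite !ffunE inordK //.
rewrite ltnS; apply: leq_trans (le_entry_rowsum W x y) _.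
apply: leq_trans (partial_rowsum W x pW) _.
by rewrite /Mb (bigD1 x) //= leq_addr.
Qed.

Definition emax n := \big[Num.max/0]_(t | partial (conv t)) (1 - hp n (conv t)).

Lemma emax_ge n W : partial W -> 1 - hp n W <= emax n.
Proof.
move=> pW; have [t ht] := conv_surj W pW; rewrite -ht.
by apply: (@le_bigmax_cond _ _ _ _ t (fun t => partial (conv t))); rewrite ht.
Qed.

Lemma emax_ge0 n : 0 <= emax n.
Proof. by apply/bigmax_geP; left. Qed.

Lemma emax_le1 n : emax n <= 1.
Proof.
apply: bigmax_le => // t pt; have := hp_bounds n (conv t) pt; lra.
Qed.

Lemma hp_mono n m W : partial W -> hp m W <= hp (n + m) W.
Proof.
move=> pW; have := submult n m W 1 _ ler01 pW.
have h : forall s, partial s -> 1 - hp n s <= 1.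
  by move=> s ps; have := hp_bounds n s ps; lra.
move=> /(_ h); rewrite mulr1; lra.
Qed.

Lemma emax_mul n m : emax (n + m) <= emax m * emax n.
Proof.
apply: bigmax_le; first by apply: mulr_ge0; exact: emax_ge0.
move=> t pt; apply: le_trans (submult n m (conv t) (emax n) _ (emax_ge0 n) pt) _.
  by move=> s ps; exact: emax_ge.
by apply: ler_wpM2r; [exact: emax_ge0 | exact: emax_ge].
Qed.

Lemma unif_pos : exists Nn, forall W, partial W -> 0 < hp Nn W.
Proof.
suff [Nn hN] : exists Nn, forall t, t \in enum {ffun X * X -> 'I_Mb.+1} ->
    partial (conv t) -> 0 < hp Nn (conv t).
  exists Nn => W pW; have [t ht] := conv_surj W pW; rewrite -ht; apply: hN; rewrite ?mem_enum ?ht //.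
elim: (enum _) => [|t s [N1 h1]]; first by exists 0%N.
have [nt hnt] : exists nt, partial (conv t) -> 0 < hp nt (conv t).
  case pt : (partial (conv t)); last by exists 0%N.
  by have [n hn] := good_all (conv t) pt; exists n.
exists (nt + N1)%N => t'; rewrite in_cons => /orP [/eqP -> pt|ht pt].
  by apply: lt_le_trans (hnt pt) _; rewrite addnC; exact: hp_mono.
by apply: lt_le_trans (h1 t' ht pt) _; exact: hp_mono.
Qed.

Local Open Scope classical_set_scope.
Local Open Scope ring_scope.
Lemma main_cvg W0 : partial W0 -> hp n W0 @[n --> \oo] --> (1 : R).
Proof.
move=> pW0.
have [Nn hN] := unif_pos.
set q := emax Nn.
have q0 : 0 <= q := emax_ge0 Nn.
have q1 : q < 1.
  apply: bigmax_lt => // t pt; have := hN _ pt; lra.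
have hk : forall k, emax (k * Nn) <= q ^+ k.
  elim=> [|k IH]; first by rewrite mul0n expr0; exact: emax_le1.
  rewrite mulSn exprSr; apply: le_trans (emax_mul Nn (k * Nn)) _.
  by apply: ler_wpM2r => //.
apply/cvgrPdist_lt => eps epos.
have hq : `|q| < 1 by rewrite ger0_norm.
have := (cvgrPdist_lt _ _).1 (cvg_geometric 1 hq) eps epos.
case=> k0 _ hk0.
have := hk0 k0 (leqnn k0); rewrite /= sub0r normrN mul1r ger0_norm ?exprn_ge0 // => hqk.
exists (k0 * Nn)%N => // n /= hn.
have hb := hp_bounds n W0 pW0.
have h1 : 1 - hp n W0 <= q ^+ k0.
  apply: le_trans (hk k0); apply: le_trans (emax_ge (k0 * Nn) W0 pW0).
  have := hp_mono (n - k0 * Nn) (k0 * Nn) W0 pW0; rewrite subnK //; lra.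
rewrite ger0_norm; last lra.
lra.
Qed.

End Prob.

Local Open Scope classical_set_scope.
Local Open Scope ring_scope.

Theorem theorem2 (R : realType) (X : finType) (E : rel X) (alpha beta : X -> nat)
  (lambda : X -> R) (kc ka gamma : R) (nu : X -> R) (Pall Pdis : state X -> X -> R)
  (hkc : 0 <= kc) (hka : 0 <= ka) (hgamma : 0 < gamma)
  (hnu : forall x, 0 <= nu x)
  (hPall0 : forall W x, partial_state E alpha beta W -> 0 <= Pall W x)
  (hPdis0 : forall W x, partial_state E alpha beta W -> 0 <= Pdis W x)
  (hPsum : forall W x, partial_state E alpha beta W -> Pall W x + Pdis W x = 1)
  (hPallfull : forall W x, partial_state E alpha beta W ->
     rowsum W x = alpha x -> Pall W x = 0)
  (hPdisempty : forall W x, partial_state E alpha beta W ->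
     rowsum W x = 0%N -> Pdis W x = 0)
  (H1 : forall x, (0 < alpha x)%N -> 0 < nu x)
  (H2 : forall W x, partial_state E alpha beta W ->
     (rowsum W x < alpha x)%N -> 0 < Pall W x)
  (H3 : forall D : {set X},
     (\sum_(x in D) alpha x <= \sum_(y in neighb E D) beta y)%N)
  (W0 : state X) (hW0 : partial_state E alpha beta W0) :
  hitprob E alpha beta lambda kc ka gamma nu Pall Pdis n W0 @[n --> \oo] --> (1 : R).
Proof.
by apply: main_cvg.
Qed.
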